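(* Let $T$ be a tree with $ex(T)\ge1$ satisfying $\dim_{1,f}(T)=\dim_f(T)$. Then: (a) if $v\in M_2(T)$, then every terminal vertex of $v$ is adjacent to $v$ in $T$; (b) $T$ contains no major vertex of terminal degree one; (c) $T$ contains neither a major vertex of terminal degree zero nor an interior degree-two vertex.
   Context: $d(x,y)$ is the distance in the tree. For a function $g$ on $V(T)$ and $U\subseteq V(T)$, $g(U)=\sum_{s\in U}g(s)$. $R\{x,y\}=\{z: d(x,z)\ne d(y,z)\}$; $g:V(T)\to[0,1]$ is a resolving function if $g(R\{x,y\})\ge1$ for all distinct $x,y$; $\dim_f(T)$ is the minimum of $g(V(T))$ over resolving functions. $d_1(x,y)=\min\{d(x,y),2\}$, $R_1\{x,y\}=\{z: d_1(x,z)\neq d_1(y,z)\}$; $h:V(T)\to[0,1]$ is a $1$-truncated resolving function if $h(R_1\{x,y\})\ge 1$ for all distinct $x,y$, and $\dim_{1,f}(T)$ is the minimum of $h(V(T))$ over such $h$. A leaf has degree one; a major vertex has degree at least three. A leaf $\ell$ is a terminal vertex of a major vertex $v$ if $d(\ell,v)<d(\ell,w)$ for every other major vertex $w$; the terminal degree $ter(v)$ is the number of terminal vertices of $v$; an exterior major vertex is a major vertex with $ter(v)>0$. $M(T)$ is the set of exterior major vertices, $ex(T)=|M(T)|$, $M_2(T)=\{w\in M(T): ter(w)\ge2\}$. An interior degree-two vertex is a vertex of degree $2$ such that the shortest path from it to any terminal vertex includes a major vertex. *)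

(* Defs.v *)
From mathcomp Require Import all_boot all_order all_algebra.
From mathcomp Require Import reals.
Set Implicit Arguments. Unset Strict Implicit. Unset Printing Implicit Defensive.
Import Order.TTheory GRing.Theory Num.Theory.

Section TreeDefs.
Variables (T : finType) (e : rel T).

Definition simple_graph : Prop := symmetric e /\ irreflexive e.

Definition is_cycle (c : seq T) : bool := [&& 2 < size c, uniq c & cycle e c].

Definition is_tree : Prop :=
  [/\ simple_graph, 0 < #|T|, (forall x y, connect e x y)
    & (forall c, ~~ is_cycle c)].

Definition ball (n : nat) (x : T) : {set T} :=
  iter n (fun A => A :|: [set y | [exists z in A, e z y]]) [set x].

(* Graph distance (for a connected graph on #|T| vertices). *)
Definition dist (x y : T) : nat :=
  find (fun n => y \in ball n x) (iota 0 #|T|).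

Definition dist1 (x y : T) : nat := minn (dist x y) 2.

Definition deg (v : T) : nat := #|[set w | e v w]|.
Definition leaf (v : T) : bool := deg v == 1.
Definition major (v : T) : bool := 2 < deg v.

Definition terminal_of (l v : T) : bool :=
  [&& leaf l, major v & [forall w, (major w && (w != v)) ==> (dist l v < dist l w)]].

Definition ter (v : T) : nat := #|[set l | terminal_of l v]|.
Definition terminal (l : T) : bool := [exists v, terminal_of l v].

Definition exterior_major (v : T) : bool := major v && (0 < ter v).
Definition MT : {set T} := [set v | exterior_major v].
Definition ex_T : nat := #|MT|.
Definition M2 : {set T} := [set w in MT | 1 < ter w].

(* An interior degree-two vertex: degree 2 and the (unique) shortest path from u
   to any terminal vertex l contains a major vertex z, i.e. a major z with
   d(u,z) + d(z,l) = d(u,l). *)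
Definition interior_deg2 (u : T) : bool :=
  (deg u == 2) &&
  [forall l, terminal l ==>
     [exists z, major z && (dist u z + dist z l == dist u l)]].

Variable R : realType.

Definition Rset (x y : T) : {set T} := [set z | dist x z != dist y z].
Definition R1set (x y : T) : {set T} := [set z | dist1 x z != dist1 y z].

Local Open Scope ring_scope.

Definition gsum (g : T -> R) (U : {set T}) : R := \sum_(s in U) g s.

Definition unit_valued (g : T -> R) : Prop := forall s, 0 <= g s <= 1.

Definition resolving_fun (g : T -> R) : Prop :=
  unit_valued g /\ forall x y, x != y -> 1 <= gsum g (Rset x y).

Definition trunc1_resolving_fun (h : T -> R) : Prop :=
  unit_valued h /\ forall x y, x != y -> 1 <= gsum h (R1set x y).

Definition is_min_total (P : (T -> R) -> Prop) (v : R) : Prop :=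
  (exists g, P g /\ gsum g setT = v) /\ (forall g, P g -> v <= gsum g setT).

Definition is_fdim (v : R) : Prop := is_min_total resolving_fun v.
Definition is_1fdim (v : R) : Prop := is_min_total trunc1_resolving_fun v.

End TreeDefs.

(* Main.v *)
Require Import Defs.
From mathcomp Require Import all_boot all_order all_algebra.
From mathcomp Require Import reals.
From mathcomp Require Import lra.
Set Implicit Arguments. Unset Strict Implicit. Unset Printing Implicit Defensive.
Import Order.TTheory GRing.Theory Num.Theory.

Section Graph.
Variables (T : finType) (e : rel T).
Hypothesis Hsym : symmetric e.
Hypothesis Hirr : irreflexive e.
Hypothesis Hconn : forall x y, connect e x y.
Hypothesis Hacyc : forall c, ~~ is_cycle e c.

Lemma ball0 x : ball e 0 x = [set x].
Proof. by []. Qed.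

Lemma ballS n x : ball e n.+1 x = ball e n x :|: [set y | [exists z in ball e n x, e z y]].
Proof. by rewrite /ball iterS. Qed.

Lemma ball_step n x w z : w \in ball e n x -> e w z -> z \in ball e n.+1 x.
Proof.
move=> Hw Hwz; rewrite ballS inE; apply/orP; right; rewrite inE.
by apply/existsP; exists w; rewrite Hw.
Qed.

Lemma ball_mono n x z : z \in ball e n x -> z \in ball e n.+1 x.
Proof. by move=> H; rewrite ballS inE H. Qed.

Lemma path_ball x p : path e x p -> last x p \in ball e (size p) x.
Proof.
elim/last_ind: p => [|p y IH]; first by rewrite /= /ball /= inE.
rewrite rcons_path => /andP [Hp He].
rewrite last_rcons size_rcons; exact: ball_step (IH Hp) He.
Qed.

Lemma exists_ball x z : exists2 n, n < #|T| & z \in ball e n x.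
Proof.
have /connectP [p Hp ->] := Hconn x z.
case: (shortenP Hp) => q Hq Hu _.
exists (size q); last exact: path_ball.
have := max_card (mem (x :: q)).
by rewrite (card_uniqP Hu).
Qed.

Lemma dist_lt x z : dist e x z < #|T|.
Proof.
have [n Hn Hb] := exists_ball x z.
rewrite /dist -[X in _ < X](size_iota 0 #|T|) -has_find.
apply/hasP; exists n; first by rewrite mem_iota.
done.
Qed.

Lemma in_ball_dist x z : z \in ball e (dist e x z) x.
Proof.
have H := dist_lt x z.
have Hh : has (fun n => z \in ball e n x) (iota 0 #|T|).
  by rewrite has_find size_iota.
have := nth_find 0 Hh.
by rewrite nth_iota // -/(dist e x z) ?add0n // size_iota.
Qed.

Lemma dist_min x z n : z \in ball e n x -> dist e x z <= n.
Proof.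
move=> Hb; case: (leqP #|T| n) => Hn.
  by apply: ltnW; apply: leq_trans (dist_lt x z) Hn.
rewrite leqNgt; apply/negP => Hlt.
have := before_find 0 Hlt.
by rewrite nth_iota // add0n Hb.
Qed.

Lemma dist_edge x a b : e a b -> dist e x b <= (dist e x a).+1.
Proof. by move=> Hab; apply: dist_min; apply: ball_step (in_ball_dist x a) Hab. Qed.

Lemma dist_desc x z : 0 < dist e x z -> exists2 w, e w z & dist e x w < dist e x z.
Proof.
move=> Hpos; have := in_ball_dist x z.
case Hd: (dist e x z) Hpos => [|k] // _.
rewrite ballS inE => /orP [Hb|].
  by have := dist_min Hb; rewrite Hd ltnn.
rewrite inE => /existsP [w /andP [Hw Hwz]].
by exists w => //; apply: leq_ltn_trans (dist_min Hw) _.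
Qed.

Lemma dist0 x z : (dist e x z == 0) = (z == x).
Proof.
apply/idP/idP => [/eqP H|/eqP ->].
  by have := in_ball_dist x z; rewrite H ball0 inE.
by rewrite -leqn0; apply: dist_min; rewrite ball0 inE.
Qed.

Lemma dist_refl x : dist e x x = 0.
Proof. by apply/eqP; rewrite dist0. Qed.

Lemma dist1E x z : x != z -> (dist e x z == 1) = e x z.
Proof.
move=> Hxz; apply/idP/idP => [/eqP H|H].
  have := in_ball_dist x z; rewrite H ballS ball0 !inE eq_sym (negbTE Hxz) /=.
  by move/existsP => [w /andP [/set1P -> ->]].
rewrite eqn_leq; apply/andP; split.
  by apply: dist_min; apply: (ball_step (w:=x)); rewrite // ball0 inE.
by rewrite lt0n dist0 eq_sym.
Qed.

Lemma dist_ge2 x z : x != z -> ~~ e x z -> 2 <= dist e x z.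
Proof.
move=> Hxz Hn; case Hd: (dist e x z) => [|[|k]] //.
  by move/eqP: Hd; rewrite dist0 eq_sym (negbTE Hxz).
by move/eqP: Hd; rewrite dist1E // (negbTE Hn).
Qed.

Lemma dist1_val x z : dist1 e x z = if z == x then 0 else if e x z then 1 else 2.
Proof.
rewrite /dist1; case: eqP => [->|/eqP Hzx]; first by rewrite dist_refl.
have Hxz : x != z by rewrite eq_sym.
case: ifP => He.
  by move: He; rewrite -dist1E // => /eqP ->.
by apply/minn_idPr; apply: dist_ge2 => //; rewrite He.
Qed.


Lemma path_avoid (e' : rel T) a x q : (forall u v, e' u v -> v != a) ->
  path e' x q -> a \notin q.
Proof.
move=> Ha; elim: q x => [|y q IH] x //= /andP [Hxy Hp].
rewrite inE negb_or (IH y Hp) andbT eq_sym; exact: Ha Hxy.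
Qed.

Lemma noP r a b1 b2 : e a b1 -> e a b2 -> b1 != b2 ->
  dist e r b1 <= dist e r a -> dist e r b2 <= dist e r a -> False.
Proof.
move=> H1 H2 Hne Hd1 Hd2.
pose e' := [rel x y | [&& e x y, x != a & y != a]].
have He'sym : symmetric e'.
  move=> x y; rewrite /e' /= Hsym.
  by case: (x != a); case: (y != a).
have desc : forall k b, dist e r b <= k -> b != a -> dist e r b <= dist e r a ->
    connect e' b r.
  elim=> [|k IH] b Hk Hba Hbd.
    move: Hk; rewrite leqn0 dist0 => /eqP ->; exact: connect0.
  case: (posnP (dist e r b)) => [/eqP|Hpos].
    by rewrite dist0 => /eqP ->; exact: connect0.
  have [w Hwb Hlt] := dist_desc Hpos.
  have Hwa : w != a.
    by apply/eqP => Hw; move: Hlt; rewrite Hw ltnNge Hbd.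
  apply: (connect_trans (y:=w)).
    by apply: connect1; rewrite /e' /= Hsym Hwb Hba Hwa.
  apply: IH => //; last exact: ltnW (leq_trans Hlt Hbd).
  by rewrite -ltnS; apply: leq_trans Hlt Hk.
have Hb1a : b1 != a by apply/eqP => Hb; move: H1; rewrite Hb Hirr.
have Hb2a : b2 != a by apply/eqP => Hb; move: H2; rewrite Hb Hirr.
have C1 := desc _ b1 (leqnn _) Hb1a Hd1.
have C2 := desc _ b2 (leqnn _) Hb2a Hd2.
have C : connect e' b1 b2.
  apply: connect_trans C1 _; by rewrite (sym_connect_sym He'sym).
case/connectP: C => p Hp Hlast.
case: (shortenP Hp) Hlast => q Hq Hu _ Hlast.
have Haq : a \notin q.
  by apply: (path_avoid (e' := e')) Hq => u v /and3P [].
apply: (negP (Hacyc (a :: b1 :: q))).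
rewrite /is_cycle; apply/and3P; split.
- case: q Hq Hu Hlast {Haq} => [|y q] //= _ _ Hl.
  by move: Hne; rewrite Hl eqxx.
- rewrite cons_uniq Hu andbT inE negb_or Haq andbT eq_sym; exact: Hb1a.
- rewrite /= H1 rcons_path -Hlast Hsym H2 andbT.
  by apply: sub_path Hq => u v /and3P [].
Qed.

Lemma closer x y : x != y -> exists2 a, leaf e a & dist e x a < dist e y a.
Proof.
move=> Hxy.
pose S := [pred a | dist e x a < dist e y a].
have Sx : S x by rewrite /S /= dist_refl lt0n dist0.
case: (arg_maxnP (fun a => dist e y a) Sx) => a Sa Hmax.
exists a => //.
have Hay : a != y.
  apply/eqP => Ha; move: Sa; by rewrite /S /= Ha dist_refl.
have Hpos : 0 < dist e y a by rewrite lt0n dist0.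
have [w Hwa _] := dist_desc Hpos.
rewrite /leaf /deg eqn_leq; apply/andP; split; last first.
  by apply/card_gt0P; exists w; rewrite inE Hsym.
rewrite leqNgt; apply/negP => /card_gt1P [b1 [b2 [Hb1 Hb2 Hne]]].
rewrite !inE in Hb1 Hb2.
have small : forall b, e a b -> dist e y b <= dist e y a.
  move=> b Hab; rewrite leqNgt; apply/negP => Hlt.
  have Sb : S b.
    rewrite /S /=; apply: leq_ltn_trans (dist_edge x Hab) _.
    by apply: leq_trans Hlt.
  by move: (Hmax b Sb) => /=; rewrite leqNgt Hlt.
exact: (noP Hb1 Hb2 Hne (small _ Hb1) (small _ Hb2)).
Qed.

Lemma forest (S : {set T}) r : r \in S ->
  exists2 i, i \in S & forall b1 b2, b1 \in S -> b2 \in S -> e i b1 -> e i b2 -> b1 = b2.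
Proof.
move=> Sr.
case: (arg_maxnP (fun a => dist e r a) Sr) => i Si Hmax.
exists i => // b1 b2 S1 S2 H1 H2.
apply/eqP; apply/negPn/negP => Hne.
exact: (noP H1 H2 Hne (Hmax _ S1 : _ <= _) (Hmax _ S2 : _ <= _)).
Qed.

Lemma closed_all (A : {set T}) x : x \in A ->
  (forall y z, y \in A -> e y z -> z \in A) -> forall z, z \in A.
Proof.
move=> Hx Hcl z; have /connectP [p Hp ->] := Hconn x z.
elim: p x Hx Hp => [|y p IH] x Hx //= /andP [Hxy Hp].
exact: IH (Hcl _ _ Hx Hxy) Hp.
Qed.

End Graph.
Section Main.
Variables (R : realType) (T : finType) (e : rel T).
Hypothesis Hsym : symmetric e.
Hypothesis Hirr : irreflexive e.
Hypothesis Hconn : forall x y, connect e x y.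
Hypothesis Hacyc : forall c, ~~ is_cycle e c.
Variable v0 : T.
Hypothesis Hv0 : major e v0.

Local Open Scope ring_scope.

Definition Lv : {set T} := [set l | leaf e l].
Definition NL : {set T} := [set s | ~~ leaf e s].
Definition Aset (s : T) : {set T} := [set l | e s l && leaf e l].
Definition sup (l : T) : T := odflt l [pick s | e l s].
Definition lf (s : T) : T := odflt s [pick l in Aset s].

Lemma leaf_uniq l w w' : leaf e l -> e l w -> e l w' -> w = w'.
Proof.
rewrite /leaf /deg => /cards1P [c Hc] H1 H2.
have : w \in [set w | e l w] by rewrite inE.
have : w' \in [set w | e l w] by rewrite inE.
by rewrite Hc !inE => /eqP -> /eqP ->.
Qed.

Lemma leaf_sup l : leaf e l -> e l (sup l).
Proof.
move=> Hl; rewrite /sup; case: pickP => [s //|H0].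
move: Hl; rewrite /leaf /deg => /cards1P [c Hc].
have : c \in [set w | e l w] by rewrite Hc inE.
by rewrite inE H0.
Qed.

Lemma major_nonleaf v : major e v -> ~~ leaf e v.
Proof. by rewrite /major /leaf => H; apply/negP => /eqP Hd; rewrite Hd in H. Qed.

Lemma sup_nonleaf l : leaf e l -> ~~ leaf e (sup l).
Proof.
move=> Hl; apply/negP => Hs.
have Hls := leaf_sup Hl.
have Hcl : forall y z, y \in [set l; sup l] -> e y z -> z \in [set l; sup l].
  move=> y z; rewrite !inE => /orP [/eqP ->|/eqP ->] Hz.
    by rewrite (leaf_uniq Hl Hz Hls) eqxx orbT.
  by rewrite Hsym in Hls; rewrite (leaf_uniq Hs Hz Hls) eqxx.
have Hlin : l \in [set l; sup l] by rewrite !inE eqxx.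
have := closed_all Hconn Hlin Hcl v0; rewrite !inE.
case/orP => /eqP Hv; have := major_nonleaf Hv0; by rewrite Hv ?Hl ?Hs.
Qed.

Lemma decomp (f : T -> R) :
  \sum_(l in Lv) f l = \sum_(s in NL) \sum_(l in Aset s) f l.
Proof.
rewrite (partition_big sup (mem NL)); last first.
  by move=> l; rewrite !inE => Hl; apply: sup_nonleaf.
apply: eq_bigr => s; rewrite inE => Hs.
apply: eq_bigl => l; rewrite !inE.
apply/idP/idP => [/andP [Hl /eqP Hsl]|/andP [Hsl Hl]].
  by rewrite Hl andbT -Hsl Hsym leaf_sup.
rewrite Hl /=; apply/eqP; apply: (leaf_uniq Hl (leaf_sup Hl)).
by rewrite Hsym.
Qed.

Lemma Aset1 s : #|Aset s| == 1%N -> Aset s = [set lf s].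
Proof.
move=> /cards1P [l0 Hl0]; rewrite Hl0 /lf; case: pickP => [l|].
  by rewrite Hl0 inE => /eqP ->.
by move/(_ l0); rewrite Hl0 inE eqxx.
Qed.

Lemma lf_in s : #|Aset s| == 1%N -> lf s \in Aset s.
Proof. by move=> H; rewrite (Aset1 H) inE. Qed.

Lemma R1_sub x y z : z \in R1set e x y -> [|| z == x, e x z, z == y | e y z].
Proof.
rewrite inE !dist1_val //.
by case: (z == x); case: (e x z); case: (z == y); case: (e y z).
Qed.

Lemma R1_common x y w : e x w -> e y w -> w \notin R1set e x y.
Proof.
move=> Hx Hy; rewrite inE !dist1_val // Hx Hy.
have -> : (w == x) = false by apply/negP => /eqP Hw; move: Hx; rewrite Hw Hirr.
have -> : (w == y) = false by apply/negP => /eqP Hw; move: Hy; rewrite Hw Hirr.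
by [].
Qed.

Variable h : T -> R.
Hypothesis Hh0 : forall s, 0 <= h s.

Lemma gsum_sub (A B : {set T}) : A \subset B -> gsum h A <= gsum h B.
Proof.
move=> HAB; rewrite /gsum [X in _ <= X](big_setID A).
have -> : B :&: A = A by apply/setIidPr.
rewrite lerDl; apply: sumr_ge0 => i _; exact: Hh0.
Qed.

Lemma gsum_cover (A Y : {set T}) (xs : seq T) :
  (forall z, z \in A -> z \in xs \/ z \in Y) ->
  gsum h A <= \sum_(x <- xs) h x + gsum h Y.
Proof.
elim: xs A => [|x xs IH] A HA.
  rewrite big_nil add0r; apply: gsum_sub; apply/subsetP => z Hz.
  by case: (HA z Hz).
rewrite big_cons -addrA.
have HD : gsum h A <= h x + gsum h (A :\ x).
  case: (boolP (x \in A)) => Hx.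
    by rewrite /gsum (big_setD1 _ Hx).
  have -> : A :\ x = A.
    by apply/setP => z; rewrite !inE; case: eqP => // ->; rewrite (negbTE Hx).
  by rewrite lerDr.
apply: le_trans HD _; rewrite lerD2l; apply: IH => z; rewrite !inE => /andP [Hzx Hz].
case: (HA z Hz); last by right.
by rewrite inE (negbTE Hzx) /=; left.
Qed.

Lemma pairwise_sum (A : {set T}) (b : T -> R) : #|A| != 1%N ->
  (forall x y, x \in A -> y \in A -> x != y -> 0 <= b x + b y) ->
  0 <= \sum_(x in A) b x.
Proof.
move=> Hc Hp.
case: (boolP [exists x in A, b x < 0]) => [/existsP [x1 /andP [Hx1 Hneg]]|Hno]; last first.
  apply: sumr_ge0 => i Hi; rewrite leNgt; apply/negP => Hlt.
  by move/negP: Hno; apply; apply/existsP; exists i; rewrite Hi.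
rewrite (big_setD1 _ Hx1) /=.
have Hge : \sum_(i in A :\ x1) (- b x1) <= \sum_(i in A :\ x1) b i.
  apply: ler_sum => i; rewrite !inE => /andP [Hix Hi].
  have := Hp _ _ Hi Hx1 Hix; lra.
have Hcard : (0 < #|A :\ x1|)%N.
  move: Hc; rewrite (cardsD1 x1) Hx1 /=; case: #|A :\ x1| => //.
rewrite sumr_const in Hge.
move: Hcard Hge; case: #|A :\ x1| => // k _ Hge.
rewrite mulrS in Hge.
have : 0 <= (- b x1) *+ k by apply: mulrn_wge0; lra.
lra.
Qed.

Hypothesis Htr : forall x y, x != y -> 1 <= gsum h (R1set e x y).

Definition S1 : {set T} := [set s in NL | #|Aset s| == 1%N].
Definition Y : {set T} := [set s in NL | #|Aset s| != 1%N].

Lemma nonleaf_cls z : ~~ leaf e z -> z \in S1 \/ z \in Y.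
Proof. by move=> Hz; rewrite !inE Hz /=; case: (#|Aset z| == 1%N); [left|right]. Qed.

Lemma inA s l : (l \in Aset s) = e s l && leaf e l.
Proof. by rewrite inE. Qed.

Lemma neq_leaf_nonleaf a b : leaf e a -> ~~ leaf e b -> a != b.
Proof. by move=> Ha Hb; apply/eqP => Hab; move: Hb; rewrite -Hab Ha. Qed.

Lemma S1_nonleaf i : i \in S1 -> ~~ leaf e i.
Proof. by rewrite !inE => /andP []. Qed.

Lemma S1_card i : i \in S1 -> #|Aset i| == 1%N.
Proof. by rewrite !inE => /andP []. Qed.

Lemma lf_leaf i : i \in S1 -> leaf e (lf i) /\ e i (lf i).
Proof. by move=> Hi; have := lf_in (S1_card Hi); rewrite inA => /andP []. Qed.

Lemma twin s l l' : l \in Aset s -> l' \in Aset s -> l != l' -> 1 <= h l + h l'.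
Proof.
rewrite !inA => /andP [Hsl Hl] /andP [Hsl' Hl'] Hne.
apply: le_trans (Htr Hne) _.
have := @gsum_cover (R1set e l l') set0 [:: l; l'].
rewrite /gsum big_set0 !big_cons big_nil !addr0 => -> // z Hz; left.
rewrite Hsym in Hsl; rewrite Hsym in Hsl'.
have Hns := R1_common Hsl Hsl'.
case/or4P: (R1_sub Hz) => [/eqP ->|Hz'|/eqP ->|Hz'].
- by rewrite inE eqxx.
- by move: Hz; rewrite -(leaf_uniq Hl Hsl Hz') (negbTE Hns).
- by rewrite !inE eqxx orbT.
- by move: Hz; rewrite -(leaf_uniq Hl' Hsl' Hz') (negbTE Hns).
Qed.

Lemma K1 i (xs : seq T) : i \in S1 -> (forall z, z \in S1 -> e i z -> z \in xs) ->
  1 <= h (lf i) + h i + \sum_(x <- xs) h x + gsum h Y.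
Proof.
move=> Hi Hxs.
have [Hlf Hilf] := lf_leaf Hi.
have Hne : lf i != i by apply: neq_leaf_nonleaf Hlf (S1_nonleaf Hi).
apply: le_trans (Htr Hne) _.
have := @gsum_cover (R1set e (lf i) i) Y [:: lf i, i & xs].
rewrite !big_cons !addrA => -> // z Hz.
case/or4P: (R1_sub Hz) => [/eqP ->|Hz'|/eqP ->|Hz'].
- by left; rewrite inE eqxx.
- rewrite Hsym in Hilf.
  by left; rewrite -(leaf_uniq Hlf Hilf Hz') !inE eqxx orbT.
- by left; rewrite !inE eqxx orbT.
- case: (boolP (leaf e z)) => Hzl.
  + have : z \in Aset i by rewrite inA Hz' Hzl.
    by rewrite (Aset1 (S1_card Hi)) inE => /eqP ->; left; rewrite inE eqxx.
  + case: (nonleaf_cls Hzl) => HS; last by right.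
    by left; rewrite !inE (Hxs _ HS Hz') !orbT.
Qed.

Lemma K2 i j : i \in S1 -> j \in S1 -> e i j -> (forall z, z \in S1 -> e i z -> z = j) ->
  1 <= h i + h (lf i) + h (lf j) + gsum h Y.
Proof.
move=> Hi Hj Hij Hu.
have [Hlfi Hilf] := lf_leaf Hi.
have [Hlfj Hjlf] := lf_leaf Hj.
have Hne : i != lf j by rewrite eq_sym; apply: neq_leaf_nonleaf Hlfj (S1_nonleaf Hi).
apply: le_trans (Htr Hne) _.
have := @gsum_cover (R1set e i (lf j)) Y [:: i; lf i; lf j].
rewrite !big_cons big_nil addr0 !addrA => -> // z Hz.
have Hjn : j \notin R1set e i (lf j) by apply: R1_common; rewrite // Hsym.
case/or4P: (R1_sub Hz) => [/eqP ->|Hz'|/eqP ->|Hz'].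
- by left; rewrite inE eqxx.
- case: (boolP (leaf e z)) => Hzl.
  + have : z \in Aset i by rewrite inA Hz' Hzl.
    by rewrite (Aset1 (S1_card Hi)) inE => /eqP ->; left; rewrite !inE eqxx orbT.
  + case: (nonleaf_cls Hzl) => HS; last by right.
    by move: Hz; rewrite (Hu _ HS Hz') (negbTE Hjn).
- by left; rewrite !inE eqxx !orbT.
- rewrite Hsym in Hjlf.
  by move: Hz; rewrite -(leaf_uniq Hlfj Hjlf Hz') (negbTE Hjn).
Qed.

Lemma K3 i j : i \in S1 -> j \in S1 -> i != j ->
  1 <= h i + h (lf i) + h j + h (lf j).
Proof.
move=> Hi Hj Hij.
have [Hlfi Hilf] := lf_leaf Hi.
have [Hlfj Hjlf] := lf_leaf Hj.
rewrite Hsym in Hilf; rewrite Hsym in Hjlf.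
have Hne : lf i != lf j.
  apply/eqP => Heq; move/negP: Hij; apply; apply/eqP.
  by apply: (leaf_uniq Hlfi Hilf); rewrite Heq.
apply: le_trans (Htr Hne) _.
have := @gsum_cover (R1set e (lf i) (lf j)) set0 [:: lf i; i; lf j; j].
rewrite /gsum big_set0 !big_cons big_nil !addr0 => H.
have -> : h i + h (lf i) + h j + h (lf j) = h (lf i) + (h i + (h (lf j) + h j)) by lra.
apply: H => z Hz; left.
case/or4P: (R1_sub Hz) => [/eqP ->|Hz'|/eqP ->|Hz'].
- by rewrite inE eqxx.
- by rewrite -(leaf_uniq Hlfi Hilf Hz') !inE eqxx orbT.
- by rewrite !inE eqxx !orbT.
- by rewrite -(leaf_uniq Hlfj Hjlf Hz') !inE eqxx !orbT.
Qed.

Lemma K0 u x : ~~ leaf e u -> Aset u = set0 -> S1 = set0 -> leaf e x ->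
  1 <= h x + gsum h Y.
Proof.
move=> Hu HA HS Hx.
have HY : forall z, ~~ leaf e z -> z \in Y.
  by move=> z Hz; case: (nonleaf_cls Hz) => //; rewrite HS inE.
have Hne : u != x by rewrite eq_sym; apply: neq_leaf_nonleaf.
apply: le_trans (Htr Hne) _.
have := @gsum_cover (R1set e u x) Y [:: x].
rewrite big_cons big_nil addr0 => -> // z Hz.
case/or4P: (R1_sub Hz) => [/eqP ->|Hz'|/eqP ->|Hz'].
- by right; apply: HY.
- right; apply: HY; apply/negP => Hzl.
  have : z \in Aset u by rewrite inA Hz' Hzl.
  by rewrite HA inE.
- by left; rewrite inE.
- by right; apply: HY; rewrite -(leaf_uniq Hx (leaf_sup Hx) Hz'); apply: sup_nonleaf.
Qed.

Lemma exists_leaf : exists x, leaf e x.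
Proof.
have : (0 < deg e v0)%N by move: Hv0; rewrite /major; case: (deg e v0).
rewrite /deg => /card_gt0P [w]; rewrite inE => Hw.
have Hne : v0 != w by apply/eqP => Heq; move: Hw; rewrite Heq Hirr.
by have [a Ha _] := closer Hsym Hirr Hconn Hacyc Hne; exists a.
Qed.

Lemma main_class : gsum h setT <= \sum_(l in Lv) (1/2 : R) ->
  forall u, ~~ leaf e u -> (1 < #|Aset u|)%N.
Proof.
move=> Hle.
pose c := fun s => h s + \sum_(l in Aset s) (h l - 1/2).
have Hsum : \sum_(s in NL) c s <= 0.
  have E1 : gsum h setT = \sum_(s in NL) h s + \sum_(l in Lv) h l.
    rewrite /gsum (big_setID NL) setTI; congr (_ + _).
    by apply: eq_bigl => z; rewrite !inE negbK andbT.
  have E2 : \sum_(s in NL) c s = \sum_(s in NL) h s + \sum_(l in Lv) (h l - 1/2).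
    by rewrite /c big_split /= decomp.
  rewrite E2 sumrB; move: Hle; rewrite E1; lra.
have HPE : \sum_(s in S1) c s + \sum_(s in Y) c s <= 0.
  move: Hsum; rewrite (big_setID S1).
  have -> : NL :&: S1 = S1 by apply/setP => z; rewrite !inE; case: (leaf e z).
  have -> : NL :\: S1 = Y.
    by apply/setP => z; rewrite !inE; case: (leaf e z); case: (#|Aset z| == 1%N).
  done.
have HcY : forall s, s \in Y -> h s <= c s.
  move=> s; rewrite !inE => /andP [_ Hc1]; rewrite /c lerDl.
  apply: pairwise_sum => // l l' Hl Hl' Hne.
  have := twin Hl Hl' Hne; lra.
have HW : gsum h Y <= \sum_(s in Y) c s by apply: ler_sum => s Hs; apply: HcY.
have HW0 : 0 <= gsum h Y by apply: sumr_ge0 => s _; apply: Hh0.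
have HcS : forall s, s \in S1 -> c s = h s + h (lf s) - 1/2.
  by move=> s Hs; rewrite /c (Aset1 (S1_card Hs)) big_set1; lra.
move=> u Hu; rewrite ltnNge; apply/negP => Hle1.
case: (set_0Vmem S1) => [HS0|[r Hr]].
- have HA : Aset u = set0.
    apply: cards0_eq; move: Hle1; case Hc: #|Aset u| => [|[|k]] // _.
    have : u \in S1 by rewrite !inE Hu Hc.
    by rewrite HS0 inE.
  have HE : \sum_(s in Y) c s <= 0 by move: HPE; rewrite HS0 big_set0 add0r.
  have [x Hx] := exists_leaf.
  have Hhl : forall l, leaf e l -> 1 <= h l.
    move=> l Hl; have := K0 Hu HA HS0 Hl; lra.
  have Hsx := sup_nonleaf Hx.
  have HsY : sup x \in Y by case: (nonleaf_cls Hsx) => //; rewrite HS0 inE.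
  have HxA : x \in Aset (sup x) by rewrite inA Hx andbT Hsym leaf_sup.
  have Hcs : 1/2 <= c (sup x).
    rewrite /c (big_setD1 _ HxA) /=.
    have : 0 <= \sum_(l in Aset (sup x) :\ x) (h l - 1/2).
      apply: sumr_ge0 => l; rewrite !inE => /and3P [_ _ Hl].
      have := Hhl _ Hl; lra.
    have := Hhl _ Hx; have := Hh0 (sup x); lra.
  have : c (sup x) <= \sum_(s in Y) c s.
    rewrite (big_setD1 _ HsY) /= lerDl; apply: sumr_ge0 => s; rewrite !inE => /andP [_ Hs].
    by apply: le_trans (HcY s _); [apply: Hh0| rewrite !inE].
  lra.
- have HK3 : forall a b, a \in S1 -> b \in S1 -> a != b -> 0 <= c a + c b.
    by move=> a b Ha Hb Hab; rewrite (HcS _ Ha) (HcS _ Hb); have := K3 Ha Hb Hab; lra.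
  have Hsplit : forall k, k \in S1 ->
      \sum_(s in S1) c s = c k + \sum_(s in S1 :\ k) c s.
    by move=> k Hk; rewrite (big_setD1 _ Hk).
  have Hrest : forall k, k \in S1 -> #|S1 :\ k| != 1%N -> 0 <= \sum_(s in S1 :\ k) c s.
    move=> k Hk Hc; apply: pairwise_sum => // a b; rewrite !in_setD1.
    move=> /andP [_ Ha] /andP [_ Hb]; exact: HK3.
  have [i Hi Huniq] := forest Hsym Hirr Hconn Hacyc Hr.
  case Hcd: (#|S1 :\ i| == 1%N).
  + case/cards1P: Hcd => j0 Hj0.
    have Hj0in : j0 \in S1 :\ i by rewrite Hj0 inE.
    have Hj0S : j0 \in S1 by move: Hj0in; rewrite in_setD1 => /andP [].
    have Hj0i : j0 != i by move: Hj0in; rewrite in_setD1 => /andP [].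
    have Hmem : forall z, z \in S1 -> z != i -> z = j0.
      move=> z Hz Hzi; have : z \in S1 :\ i by rewrite in_setD1 Hzi Hz.
      by rewrite Hj0 inE => /eqP.
    have HP : \sum_(s in S1) c s = c i + c j0 by rewrite (Hsplit i Hi) Hj0 big_set1.
    have H3 := HK3 _ _ Hi Hj0S (ltac:(by rewrite eq_sym)).
    rewrite HP in HPE.
    have Hci := HcS _ Hi; have Hcj := HcS _ Hj0S.
    case: (boolP [exists z in S1, e i z]) => [/existsP [z /andP [Hz Hiz]]|Hno].
    * have Hzj : z = j0 by apply: Hmem => //; apply/eqP => Hzi; move: Hiz; rewrite Hzi Hirr.
      rewrite Hzj in Hiz.
      have Hui : forall w, w \in S1 -> e i w -> w = j0.
        by move=> w Hw Hiw; apply: Hmem => //; apply/eqP => Hwi; move: Hiw; rewrite Hwi Hirr.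
      have Huj : forall w, w \in S1 -> e j0 w -> w = i.
        move=> w Hw Hjw; case: (eqVneq w i) => // Hwi.
        by move: Hjw; rewrite (Hmem _ Hw Hwi) Hirr.
      have Hji : e j0 i by rewrite Hsym.
      have A1 := K1 (xs := [:: j0]) Hi (fun w Hw Hiw => ltac:(by rewrite inE (Hui w Hw Hiw))).
      have A2 := K1 (xs := [:: i]) Hj0S (fun w Hw Hjw => ltac:(by rewrite inE (Huj w Hw Hjw))).
      have A3 := K2 Hi Hj0S Hiz Hui.
      have A4 := K2 Hj0S Hi Hji Huj.
      move: A1 A2; rewrite !big_cons !big_nil => A1 A2.
      lra.
    * have Hnb : forall w, w \in S1 -> e i w -> False.
        by move=> w Hw Hiw; move/negP: Hno; apply; apply/existsP; exists w; rewrite Hw.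
      have Hnb' : forall w, w \in S1 -> e j0 w -> False.
        move=> w Hw Hjw; case: (eqVneq w i) => Hwi.
          by apply: (Hnb j0 Hj0S); rewrite Hsym -Hwi.
        by move: Hjw; rewrite (Hmem _ Hw Hwi) Hirr.
      have A1 := K1 (xs := [::]) Hi (fun w Hw Hiw => match Hnb w Hw Hiw with end).
      have A2 := K1 (xs := [::]) Hj0S (fun w Hw Hjw => match Hnb' w Hw Hjw with end).
      move: A1 A2; rewrite !big_nil => A1 A2.
      lra.
  + have Hri := Hrest i Hi (negbT Hcd).
    rewrite (Hsplit i Hi) in HPE.
    have Hci := HcS _ Hi.
    case: (boolP [exists z in S1, e i z]) => [/existsP [j /andP [Hj Hij]]|Hno].
    * have Hui : forall w, w \in S1 -> e i w -> w = j.
        by move=> w Hw Hiw; apply: Huniq.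
      have Hcdj : #|S1 :\ j| != 1%N.
        have E1 := cardsD1 i S1; have E2 := cardsD1 j S1.
        rewrite Hi in E1; rewrite Hj in E2.
        have -> : #|S1 :\ j| = #|S1 :\ i| by move: E1 E2 => /= -> [].
        by rewrite Hcd.
      have Hrj := Hrest j Hj Hcdj.
      have HPj := Hsplit j Hj; rewrite (Hsplit i Hi) in HPj.
      have Hcj := HcS _ Hj.
      have A1 := K1 (xs := [:: j]) Hi (fun w Hw Hiw => ltac:(by rewrite inE (Hui w Hw Hiw))).
      have A3 := K2 Hi Hj Hij Hui.
      move: A1; rewrite !big_cons !big_nil => A1.
      lra.
    * have Hnb : forall w, w \in S1 -> e i w -> False.
        by move=> w Hw Hiw; move/negP: Hno; apply; apply/existsP; exists w; rewrite Hw.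
      have A1 := K1 (xs := [::]) Hi (fun w Hw Hiw => match Hnb w Hw Hiw with end).
      move: A1; rewrite !big_nil => A1.
      lra.
Qed.

Section Concl.
Hypothesis Hcl : forall u, ~~ leaf e u -> (1 < #|Aset u|)%N.

Lemma nonleaf_major u : ~~ leaf e u -> major e u.
Proof.
move=> Hu; have H2 := Hcl Hu.
have Hsub : Aset u \subset [set w | e u w].
  by apply/subsetP => z; rewrite inA inE => /andP [].
have Hd := subset_leq_card Hsub.
rewrite /major; rewrite ltnNge; apply/negP => Hle.
have Hdeq : (#|[set w | e u w]| <= #|Aset u|)%N by apply: leq_trans Hle H2.
have /eqP HN : Aset u == [set w | e u w] by rewrite eqEcard Hsub Hdeq.
have HC : forall y z, y \in u |: Aset u -> e y z -> z \in u |: Aset u.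
  move=> y z; rewrite in_setU1 => /orP [/eqP ->|Hy] Hyz.
    by rewrite in_setU1 HN inE Hyz orbT.
  move: Hy; rewrite inA => /andP [Huy Hly].
  rewrite Hsym in Huy.
  by rewrite -(leaf_uniq Hly Huy Hyz) in_setU1 eqxx.
have Hu0 : u \in u |: Aset u by rewrite in_setU1 eqxx.
have := closed_all Hconn Hu0 HC v0; rewrite in_setU1 => /orP [/eqP Hv|].
  by move: Hv0; rewrite Hv /major /deg; move: Hle; rewrite /deg; case: #|_| => [|[|[|k]]].
by rewrite inA => /andP [_ Hl]; move: (major_nonleaf Hv0); rewrite Hl.
Qed.

Lemma concl_a v l : terminal_of e l v -> e v l.
Proof.
case/and3P => Hl Hv /forallP Hw.
have Hs := leaf_sup Hl.
have Hsmaj := nonleaf_major (sup_nonleaf Hl).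
case: (eqVneq (sup l) v) => [<-|Hne]; first by rewrite Hsym.
have := Hw (sup l); rewrite Hsmaj Hne /= => Hlt.
have Hls : l != sup l by apply: neq_leaf_nonleaf => //; apply: sup_nonleaf.
have Hd1 : dist e l (sup l) = 1%N by apply/eqP; rewrite (dist1E Hconn Hls).
move: Hlt; rewrite Hd1 ltnS leqn0 (dist0 Hconn) => /eqP Hvl.
by move: (major_nonleaf Hv); rewrite Hvl Hl.
Qed.

Lemma concl_b v : major e v -> (2 <= ter e v)%N.
Proof.
move=> Hv; have H2 := Hcl (major_nonleaf Hv).
apply: leq_trans H2 _; apply: subset_leq_card; apply/subsetP => l.
rewrite inA inE => /andP [Hvl Hl].
rewrite /terminal_of Hl Hv /=; apply/forallP => w; apply/implyP => /andP [Hw Hwv].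
have Hlv : l != v by apply: neq_leaf_nonleaf => //; apply: major_nonleaf.
have Hlv' : e l v by rewrite Hsym.
have -> : dist e l v = 1%N by apply/eqP; rewrite (dist1E Hconn Hlv).
apply: dist_ge2 => //.
  by apply: neq_leaf_nonleaf => //; apply: major_nonleaf.
apply/negP => Hlw; move/negP: Hwv; apply; apply/eqP.
exact: (leaf_uniq Hl Hlw Hlv').
Qed.

Lemma concl_c u : ~~ interior_deg2 e u.
Proof.
rewrite /interior_deg2; apply/negP => /andP [/eqP Hd _].
have Hu : ~~ leaf e u by rewrite /leaf Hd.
by move: (nonleaf_major Hu); rewrite /major Hd.
Qed.

End Concl.

End Main.

Theorem lemma3p15 (R : realType) (T : finType) (e : rel T) :
  is_tree e ->
  1 <= ex_T e ->
  (exists v : R, is_fdim e v /\ is_1fdim e v) ->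
  [/\ (forall v, v \in M2 e -> forall l, terminal_of e l v -> e v l),
      (forall v, major e v -> ter e v <> 1)
    & (forall v, major e v -> ter e v <> 0) /\ (forall u, ~~ interior_deg2 e u)].
Proof.
move=> [[Hsym Hirr] _ Hconn Hacyc] Hex [v [[_ Hmin] [[h [[Hh Htr] Hhv]] _]]].
have [v0] : exists v0, v0 \in MT e by apply/card_gt0P.
rewrite inE => /andP [Hv0 _].
have Hh0 : forall s, (0 <= h s)%R by move=> s; case/andP: (Hh s).
pose g0 := fun z : T => if leaf e z then (1/2 : R)%R else (0 : R)%R.
have Hg00 : forall s, (0 <= g0 s)%R by move=> s; rewrite /g0; case: (leaf e s) => //; lra.
have Hg0 : resolving_fun e g0.
  split.
    by move=> s; rewrite /g0; case: (leaf e s); apply/andP; split; lra.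
  move=> x y Hxy.
  have [a Ha Hda] := closer Hsym Hirr Hconn Hacyc Hxy.
  have Hyx : y != x by rewrite eq_sym.
  have [b Hb Hdb] := closer Hsym Hirr Hconn Hacyc Hyx.
  have Hab : a != b.
    by apply/eqP => Hab; move: Hda; rewrite Hab ltnNge (ltnW Hdb).
  have Hsub : [set a; b] \subset Rset e x y.
    apply/subsetP => z; rewrite !inE => /orP [/eqP ->|/eqP ->].
      by rewrite neq_ltn Hda.
    by rewrite neq_ltn Hdb orbT.
  apply: le_trans (gsum_sub Hg00 Hsub).
  rewrite /gsum big_setU1 /=; last by rewrite inE.
  by rewrite big_set1 /g0 Ha Hb; lra.
have Hle : (gsum h setT <= \sum_(l in Lv e) (1/2)%R)%R.
  rewrite Hhv; apply: le_trans (Hmin _ Hg0) _.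
  rewrite /gsum (big_setID (Lv e)) setTI.
  have -> : (\sum_(i in [set: T] :\: Lv e) g0 i = 0)%R.
    by apply: big1 => z; rewrite !inE /g0 => /andP [Hz _]; rewrite (negbTE Hz).
  rewrite -[X in (X <= _)%R]/(\sum_(i in Lv e) g0 i + 0)%R addr0.
  by rewrite (eq_bigr (fun=> 1/2)%R) // => z; rewrite inE /g0 => ->.
have Hcl := main_class Hsym Hirr Hconn Hacyc Hv0 Hh0 Htr Hle.
split.
- move=> w _ l; exact: (concl_a Hsym Hconn Hv0 Hcl).
- by move=> w Hw H1; have := concl_b Hsym Hconn Hcl Hw; rewrite H1.
- split.
  + by move=> w Hw H1; have := concl_b Hsym Hconn Hcl Hw; rewrite H1.
  + move=> u; exact: (concl_c Hsym Hconn Hv0 Hcl).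
Qed.
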